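(* Let $T$ be a bimonad on a left closed monoidal category $\mathcal C$. The following are equivalent: (i) $T$ is a left Hopf monad; (ii) the monoidal category $\mathcal C^T$ is left closed and the forgetful functor $U_T\colon\mathcal C^T\to\mathcal C$ is left closed; (iii) $T$ admits a left (binary) antipode. Moreover, in that case a left internal Hom of $T$-modules $(M,r),(N,t)$ is $([M,N]^l,\,[M,t]^l\,s^l_{M,N}\,T[r,N]^l)$ with evaluation $\mathrm{ev}^M_N$. (The analogous statement holds for right closed $\mathcal C$, right Hopf monads and right antipodes.)
   Context: Monoidal categories are strict. A bimonad on $\mathcal C$ is a monad $(T,\mu,\eta)$ with a comonoidal structure $T_2(X,Y)\colon T(X\otimes Y)\to TX\otimes TY$, $T_0\colon T\mathbb 1\to\mathbb 1$ (coassociative, counital) such that $\mu,\eta$ are comonoidal natural transformations. $\mathcal C^T$ is the category of $T$-modules, monoidal with $(M,r)\otimes(N,s)=(M\otimes N,(r\otimes s)T_2(M,N))$, unit $(\mathbb 1,T_0)$; $U_T$ is strict monoidal. $T$ is a left Hopf monad if $H^l_{X,Y}=(TX\otimes\mu_Y)T_2(X,TY)\colon T(X\otimes TY)\to TX\otimes TY$ is invertible for all $X,Y$. A monoidal category is left closed if each $?\otimes X$ has a right adjoint $[X,?]^l$, with counit $\mathrm{ev}^X_Y\colon[X,Y]^l\otimes X\to Y$ and unit $\mathrm{coev}^X_Y\colon Y\to[X,Y\otimes X]^l$; $[-,-]^l$ is a functor $\mathcal C^{op}\times\mathcal C\to\mathcal C$. A strong monoidal functor $U$ is left closed if the canonical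 maps $U[X,Y]^l\to[UX,UY]^l$ (adjoint to $U(\mathrm{ev}^X_Y)U_2([X,Y]^l,X)$) are isomorphisms. A left (binary) antipode for $T$ is a natural transformation $s^l_{X,Y}\colon T[TX,Y]^l\to[X,TY]^l$ such that for all $X,Y$: (1) $T\big(\mathrm{ev}^X_Y([\eta_X,Y]^l\otimes X)\big)=\mathrm{ev}^{TX}_{TY}\big(s^l_{TX,Y}\,T[\mu_X,Y]^l\otimes TX\big)T_2([TX,Y]^l,X)$; (2) $[X,TY\otimes\eta_X]^l\,\mathrm{coev}^X_{TY}=[X,(TY\otimes\mu_X)T_2(Y,TX)]^l\,s^l_{X,Y\otimes TX}\,T(\mathrm{coev}^{TX}_Y)$. *)

(* Defs.v *)
Set Implicit Arguments.
Unset Strict Implicit.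

Definition cast {O : Type} {H : O -> O -> Type} {A A' B B' : O}
  (e1 : A = A') (e2 : B = B') (f : H A B) : H A' B' :=
  match e1 in _ = A1, e2 in _ = B1 return H A1 B1 with eq_refl, eq_refl => f end.

Record SMCat := {
  Ob : Type;
  Hom : Ob -> Ob -> Type;
  idm : forall A, Hom A A;
  comp : forall A B C, Hom B C -> Hom A B -> Hom A C;
  comp_idl : forall A B (f : Hom A B), comp (idm B) f = f;
  comp_idr : forall A B (f : Hom A B), comp f (idm A) = f;
  comp_assoc : forall A B C D (h : Hom C D) (g : Hom B C) (f : Hom A B),
      comp h (comp g f) = comp (comp h g) f;
  tens : Ob -> Ob -> Ob;
  tensm : forall A A' B B', Hom A A' -> Hom B B' -> Hom (tens A B) (tens A' B');
  tensm_id : forall A B, tensm (idm A) (idm B) = idm (tens A B);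
  tensm_comp : forall A A' A'' B B' B'' (f : Hom A A') (f' : Hom A' A'')
      (g : Hom B B') (g' : Hom B' B''),
      tensm (comp f' f) (comp g' g) = comp (tensm f' g') (tensm f g);
  unit : Ob;
  tens_assoc : forall A B C, tens (tens A B) C = tens A (tens B C);
  tens_unitl : forall A, tens unit A = A;
  tens_unitr : forall A, tens A unit = A;
  tensm_assoc : forall A A' B B' C C' (f : Hom A A') (g : Hom B B') (h : Hom C C'),
      @cast _ Hom _ _ _ _ (tens_assoc A B C) (tens_assoc A' B' C') (tensm (tensm f g) h)
      = tensm f (tensm g h);
  tensm_unitl : forall A A' (f : Hom A A'),
      @cast _ Hom _ _ _ _ (tens_unitl A) (tens_unitl A') (tensm (idm unit) f) = f;
  tensm_unitr : forall A A' (f : Hom A A'),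
      @cast _ Hom _ _ _ _ (tens_unitr A) (tens_unitr A') (tensm f (idm unit)) = f
}.

Arguments Hom {s} _ _.
Arguments idm {s} A.
Arguments comp {s A B C} _ _.
Arguments tens {s} _ _.
Arguments tensm {s A A' B B'} _ _.
Arguments unit {s}.
Arguments tens_assoc {s} A B C.
Arguments tens_unitl {s} A.
Arguments tens_unitr {s} A.

Notation "g ∘ f" := (comp g f) (at level 40, left associativity).
Notation "f ⊗ g" := (tensm f g) (at level 35).

Record Bimonad (C : SMCat) := {
  BT : Ob C -> Ob C;
  BTm : forall A B : Ob C, Hom A B -> Hom (BT A) (BT B);
  BTm_id : forall A, BTm (idm A) = idm (BT A);
  BTm_comp : forall A B D (f : Hom A B) (g : Hom B D), BTm (g ∘ f) = BTm g ∘ BTm f;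
  Bmu : forall A, Hom (BT (BT A)) (BT A);
  Beta : forall A, Hom A (BT A);
  Bmu_nat : forall A B (f : Hom A B), BTm f ∘ Bmu A = Bmu B ∘ BTm (BTm f);
  Beta_nat : forall A B (f : Hom A B), BTm f ∘ Beta A = Beta B ∘ f;
  Bmu_assoc : forall A, Bmu A ∘ BTm (Bmu A) = Bmu A ∘ Bmu (BT A);
  Bmu_etal : forall A, Bmu A ∘ Beta (BT A) = idm (BT A);
  Bmu_etar : forall A, Bmu A ∘ BTm (Beta A) = idm (BT A);
  BT2 : forall A B, Hom (BT (tens A B)) (tens (BT A) (BT B));
  BT0 : Hom (BT unit) unit;
  BT2_nat : forall A A' B B' (f : Hom A A') (g : Hom B B'),
      (BTm f ⊗ BTm g) ∘ BT2 A B = BT2 A' B' ∘ BTm (f ⊗ g);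
  BT2_coassoc : forall X Y Z,
      @cast _ (@Hom C) _ _ _ _ (f_equal BT (tens_assoc X Y Z))
            (tens_assoc (BT X) (BT Y) (BT Z))
            ((BT2 X Y ⊗ idm (BT Z)) ∘ BT2 (tens X Y) Z)
      = (idm (BT X) ⊗ BT2 Y Z) ∘ BT2 X (tens Y Z);
  BT2_counitl : forall X,
      @cast _ (@Hom C) _ _ _ _ (f_equal BT (tens_unitl X)) (tens_unitl (BT X))
            ((BT0 ⊗ idm (BT X)) ∘ BT2 unit X) = idm (BT X);
  BT2_counitr : forall X,
      @cast _ (@Hom C) _ _ _ _ (f_equal BT (tens_unitr X)) (tens_unitr (BT X))
            ((idm (BT X) ⊗ BT0) ∘ BT2 X unit) = idm (BT X);
  Bmu_T2 : forall X Y,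
      BT2 X Y ∘ Bmu (tens X Y) = (Bmu X ⊗ Bmu Y) ∘ BT2 (BT X) (BT Y) ∘ BTm (BT2 X Y);
  Bmu_T0 : BT0 ∘ Bmu unit = BT0 ∘ BTm BT0;
  Beta_T2 : forall X Y, BT2 X Y ∘ Beta (tens X Y) = Beta X ⊗ Beta Y;
  Beta_T0 : BT0 ∘ Beta unit = idm unit
}.

Arguments BT {C} b _.
Arguments BTm {C} b {A B} _.
Arguments Bmu {C} b A.
Arguments Beta {C} b A.
Arguments BT2 {C} b A B.
Arguments BT0 {C} b.

(* A left closed structure: a right adjoint [X,-]^l of (- ⊗ X), given by
   internal homs, evaluations and the (bijective) currying. *)
Record LeftClosed (C : SMCat) := {
  ihom : Ob C -> Ob C -> Ob C;
  ev : forall X Y : Ob C, Hom (tens (ihom X Y) X) Y;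
  curry : forall X Y Z : Ob C, Hom (tens Z X) Y -> Hom Z (ihom X Y);
  ev_curry : forall X Y Z (f : Hom (tens Z X) Y), ev X Y ∘ (curry f ⊗ idm X) = f;
  curry_ev : forall X Y Z (g : Hom Z (ihom X Y)), curry (ev X Y ∘ (g ⊗ idm X)) = g
}.

Arguments ihom {C} l X Y.
Arguments ev {C} l X Y.
Arguments curry {C} l {X Y Z} _.

Section Defs.
Context {C : SMCat} (L : LeftClosed C) (T : Bimonad C).

Definition ihom_map {X X' Y Y' : Ob C} (f : Hom X' X) (g : Hom Y Y')
  : Hom (ihom L X Y) (ihom L X' Y') :=
  curry L (g ∘ ev L X Y ∘ (idm (ihom L X Y) ⊗ f)).

Definition coev (X Y : Ob C) : Hom Y (ihom L X (tens Y X)) :=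
  curry L (idm (tens Y X)).

Definition is_iso {A B : Ob C} (f : Hom A B) : Prop :=
  exists g : Hom B A, g ∘ f = idm A /\ f ∘ g = idm B.

Definition is_module (M : Ob C) (r : Hom (BT T M) M) : Prop :=
  r ∘ Beta T M = idm M /\ r ∘ BTm T r = r ∘ Bmu T M.

Definition is_mod_hom (M : Ob C) (r : Hom (BT T M) M) (N : Ob C) (t : Hom (BT T N) N)
  (f : Hom M N) : Prop := t ∘ BTm T f = f ∘ r.

Definition tens_act (M : Ob C) (r : Hom (BT T M) M) (N : Ob C) (s : Hom (BT T N) N)
  : Hom (BT T (tens M N)) (tens M N) := (r ⊗ s) ∘ BT2 T M N.

Definition is_left_ihom_EM (M : Ob C) (r : Hom (BT T M) M) (N : Ob C) (t : Hom (BT T N) N)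
  (H : Ob C) (h : Hom (BT T H) H) (e : Hom (tens H M) N) : Prop :=
  is_module h /\ is_mod_hom (tens_act h r) t e /\
  forall (Z : Ob C) (z : Hom (BT T Z) Z), is_module z ->
  forall f : Hom (tens Z M) N, is_mod_hom (tens_act z r) t f ->
  exists g : Hom Z H, is_mod_hom z h g /\ e ∘ (g ⊗ idm M) = f /\
    forall g' : Hom Z H, is_mod_hom z h g' -> e ∘ (g' ⊗ idm M) = f -> g' = g.

Definition is_left_Hopf : Prop :=
  forall X Y : Ob C, is_iso ((idm (BT T X) ⊗ Bmu T Y) ∘ BT2 T X (BT T Y)).

(* (ii) C^T is left closed and U_T is left closed: for all modules (M,r),(N,t)
   there is a left internal Hom ((H,h),e) in C^T such that the canonical map
   U_T H -> [U_T M, U_T N]^l (adjoint to U_T(e), U_T being strict) is an iso. *)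
Definition EM_left_closed_and_U_left_closed : Prop :=
  forall (M : Ob C) (r : Hom (BT T M) M), is_module r ->
  forall (N : Ob C) (t : Hom (BT T N) N), is_module t ->
  exists (H : Ob C) (h : Hom (BT T H) H) (e : Hom (tens H M) N),
    is_left_ihom_EM r t h e /\ is_iso (curry L e).

Definition is_left_antipode
  (s : forall X Y : Ob C, Hom (BT T (ihom L (BT T X) Y)) (ihom L X (BT T Y))) : Prop :=
  (forall X X' Y (f : Hom X' X),
      s X' Y ∘ BTm T (ihom_map (BTm T f) (idm Y)) = ihom_map f (idm (BT T Y)) ∘ s X Y) /\
  (forall X Y Y' (g : Hom Y Y'),
      s X Y' ∘ BTm T (ihom_map (idm (BT T X)) g) = ihom_map (idm X) (BTm T g) ∘ s X Y) /\
  (forall X Y,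
      BTm T (ev L X Y ∘ (ihom_map (Beta T X) (idm Y) ⊗ idm X))
      = ev L (BT T X) (BT T Y)
        ∘ ((s (BT T X) Y ∘ BTm T (ihom_map (Bmu T X) (idm Y))) ⊗ idm (BT T X))
        ∘ BT2 T (ihom L (BT T X) Y) X) /\
  (forall X Y,
      ihom_map (idm X) (idm (BT T Y) ⊗ Beta T X) ∘ coev X (BT T Y)
      = ihom_map (idm X) ((idm (BT T Y) ⊗ Bmu T X) ∘ BT2 T Y (BT T X))
        ∘ s X (tens Y (BT T X)) ∘ BTm T (coev (BT T X) Y)).

Definition has_left_antipode : Prop :=
  exists s, is_left_antipode s.

End Defs.

(* Main.v *)
Require Import Defs.
From Stdlib Require Import ssreflect ClassicalEpsilon.


Ltac rapp l y := lazymatch l with | ?a ∘ ?b => let r := rapp b y in constr:(a ∘ r) | _ => constr:(l ∘ y) end.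
Ltac ra := rewrite -?comp_assoc.
Ltac rwr E :=
  let E0 := fresh "E0" in pose proof E as E0; rewrite -?comp_assoc in E0;
  lazymatch type of E0 with @eq (@Hom ?s ?A ?B) ?l ?r =>
   let H2 := fresh "H2" in
   eassert (H2 : forall (D : Ob s) (y : Hom D A), _ = r ∘ y);
   [ let y0 := fresh "y" in intros ? y0; let t := rapp l y0 in
     refine (_ : t = r ∘ y0); transitivity (l ∘ y0); [rewrite -?comp_assoc; reflexivity | rewrite E0; reflexivity]
   | rewrite -?comp_assoc; first [rewrite H2 | rewrite E0]; clear H2 E0; rewrite -?comp_assoc ] end.
Ltac rwl E := rwr (eq_sym E).

Section Gen.
Context {C : SMCat}.

Lemma tmerge {A A' A'' B B' B'' : Ob C} (f : Hom A A') (f' : Hom A' A'') (g : Hom B B') (g' : Hom B' B'') :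
  f' ⊗ g' ∘ f ⊗ g = (f' ∘ f) ⊗ (g' ∘ g).
Proof. by rewrite tensm_comp. Qed.
Lemma tmerge_r {A A' A'' B B' B'' D: Ob C} (f : Hom A A') (f' : Hom A' A'') (g : Hom B B') (g' : Hom B' B'') (y : Hom D _):
  f' ⊗ g' ∘ (f ⊗ g ∘ y) = (f' ∘ f) ⊗ (g' ∘ g) ∘ y.
Proof. by rewrite comp_assoc tensm_comp. Qed.
Lemma tsplit_l {A A' B B' : Ob C} (f : Hom A A') (g : Hom B B') : f ⊗ g = f ⊗ idm B' ∘ idm A ⊗ g.
Proof. by rewrite tmerge comp_idl comp_idr. Qed.
Lemma tsplit_r {A A' B B' : Ob C} (f : Hom A A') (g : Hom B B') : f ⊗ g = idm A' ⊗ g ∘ f ⊗ idm B.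
Proof. by rewrite tmerge comp_idl comp_idr. Qed.
Lemma xch {A A' B B' : Ob C} (f : Hom A A') (g : Hom B B') :
  idm A' ⊗ g ∘ f ⊗ idm B = f ⊗ idm B' ∘ idm A ⊗ g.
Proof. by rewrite !tmerge !comp_idl !comp_idr. Qed.
Lemma tcomp_id {A A' A'' B : Ob C} (f : Hom A' A'') (g : Hom A A') :
  (f ∘ g) ⊗ idm B = f ⊗ idm B ∘ g ⊗ idm B.
Proof. by rewrite tmerge comp_idl. Qed.
Lemma tsplit_cl {A A' A'' B B' : Ob C} (f : Hom A' A'') (g : Hom A A') (h : Hom B B') :
  (f ∘ g) ⊗ h = f ⊗ idm B' ∘ g ⊗ h.
Proof. by rewrite tmerge comp_idl. Qed.
Lemma tsplit_cl2 {A A' A'' B B' : Ob C} (f : Hom A' A'') (g : Hom A A') (h : Hom B B') :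
  (f ∘ g) ⊗ h = f ⊗ h ∘ g ⊗ idm B.
Proof. by rewrite tmerge comp_idr. Qed.
End Gen.

Ltac tnorm := ra; rewrite ?tmerge_r ?tmerge; ra; rewrite ?comp_idl ?comp_idr ?tensm_id ?comp_idl ?comp_idr.

Section Closed.
Context {C : SMCat} (L : LeftClosed C).

Lemma ev_curry_r {X Y Z D : Ob C} (f : Hom (tens Z X) Y) (g : Hom D Z) :
  ev L X Y ∘ ((curry L f ∘ g) ⊗ idm X) = f ∘ (g ⊗ idm X).
Proof. by rewrite -{1}(comp_idl (idm X)) -tmerge comp_assoc ev_curry. Qed.

Lemma curry_nat {X Y Z D : Ob C} (f : Hom (tens Z X) Y) (g : Hom D Z) :
  curry L f ∘ g = curry L (f ∘ (g ⊗ idm X)).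
Proof. by rewrite -ev_curry_r curry_ev. Qed.

Lemma curry_inj {X Y Z : Ob C} (f g : Hom (tens Z X) Y) : curry L f = curry L g -> f = g.
Proof. move=> H. by rewrite -(ev_curry L f) H ev_curry. Qed.

Lemma ev_inj {X Y Z : Ob C} (f g : Hom Z (ihom L X Y)) :
  ev L X Y ∘ (f ⊗ idm X) = ev L X Y ∘ (g ⊗ idm X) -> f = g.
Proof. move=> H. by rewrite -(curry_ev f) H curry_ev. Qed.

Lemma ev_ihom_map {X X' Y Y' : Ob C} (f : Hom X' X) (g : Hom Y Y') :
  ev L X' Y' ∘ (ihom_map L f g ⊗ idm X') = g ∘ ev L X Y ∘ (idm _ ⊗ f).
Proof. by rewrite /ihom_map ev_curry. Qed.

Lemma ihom_map_curry {X X' Y Y' Z : Ob C} (f : Hom X' X) (g : Hom Y Y') (k : Hom (tens Z X) Y) :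
  ihom_map L f g ∘ curry L k = curry L (g ∘ k ∘ (idm _ ⊗ f)).
Proof.
  rewrite /ihom_map curry_nat. f_equal.
  ra. rwr (xch (curry L k) f).
  rwr (ev_curry L k). reflexivity.
Qed.

Lemma ihom_map_comp {X X' X'' Y Y' Y'' : Ob C} (f : Hom X' X) (g : Hom Y Y') (f' : Hom X'' X') (g' : Hom Y' Y'') :
  ihom_map L f' g' ∘ ihom_map L f g = ihom_map L (f ∘ f') (g' ∘ g).
Proof.
  rewrite {1}/ihom_map ihom_map_curry /ihom_map. f_equal. tnorm. reflexivity.
Qed.

Lemma ihom_map_id {X Y : Ob C} : ihom_map L (idm X) (idm Y) = idm _.
Proof. rewrite /ihom_map comp_idl. exact (curry_ev (idm _)). Qed.

Lemma ev_coev {X Y : Ob C} : ev L X (tens Y X) ∘ (coev L X Y ⊗ idm X) = idm _.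
Proof. by rewrite /coev ev_curry. Qed.

Lemma e_curry {X Y Z D : Ob C} (e : Hom (tens Z X) Y) (g : Hom D Z) :
  e ∘ (g ⊗ idm X) = ev L X Y ∘ ((curry L e ∘ g) ⊗ idm X).
Proof. by rewrite ev_curry_r. Qed.

End Closed.

Ltac bn := repeat (ra; rewrite ?tmerge_r ?tmerge ?BTm_id ?tensm_id ?comp_idl ?comp_idr; ra).

Section Bimon.
Context {C : SMCat} (T : Bimonad C).

Definition Hl (X Y : Ob C) := (idm (BT T X) ⊗ Bmu T Y) ∘ BT2 T X (BT T Y).

Lemma free_ext {A N : Ob C} (t : Hom (BT T N) N) (f : Hom (BT T A) N) :
  t ∘ BTm T f = f ∘ Bmu T A -> f = t ∘ BTm T (f ∘ Beta T A).
Proof. move=> H. by rewrite BTm_comp comp_assoc H -comp_assoc Bmu_etar comp_idr. Qed.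

Lemma mod_comp {A B D : Ob C} (r : Hom (BT T A) A) (s : Hom (BT T B) B) (t : Hom (BT T D) D)
  (f : Hom A B) (g : Hom B D) : is_mod_hom r s f -> is_mod_hom s t g -> is_mod_hom r t (g ∘ f).
Proof. rewrite /is_mod_hom => H1 H2. rewrite BTm_comp. rwr H2. rwr H1. reflexivity. Qed.

Lemma tens_mod {A A' B B' : Ob C} (r : Hom (BT T A) A) (r' : Hom (BT T A') A')
  (s : Hom (BT T B) B) (s' : Hom (BT T B') B') f g :
  is_mod_hom r r' f -> is_mod_hom s s' g -> is_mod_hom (tens_act r s) (tens_act r' s') (f ⊗ g).
Proof.
  rewrite /is_mod_hom /tens_act => H1 H2. rwl (BT2_nat T f g). bn. by rewrite H1 H2.
Qed.

Lemma Hl_nat1 {A A' Z : Ob C} (g : Hom A A') :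
  Hl A' Z ∘ BTm T (g ⊗ idm (BT T Z)) = (BTm T g ⊗ idm _) ∘ Hl A Z.
Proof. rewrite /Hl. rwl (BT2_nat T g (idm (BT T Z))). bn. reflexivity. Qed.

Lemma Hl_nat2 {A X X' : Ob C} (f : Hom X' X) :
  Hl A X ∘ BTm T (idm A ⊗ BTm T f) = (idm _ ⊗ BTm T f) ∘ Hl A X'.
Proof. rewrite /Hl. rwl (BT2_nat T (idm A) (BTm T f)). bn. by rewrite Bmu_nat. Qed.

Lemma Hl_mu {A X : Ob C} :
  Hl A X ∘ BTm T (idm A ⊗ Bmu T X) = (idm _ ⊗ Bmu T X) ∘ Hl A (BT T X).
Proof. rewrite /Hl. rwl (BT2_nat T (idm A) (Bmu T X)). bn. by rewrite Bmu_assoc. Qed.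

Lemma Hl_eta {A X : Ob C} : Hl A X ∘ BTm T (idm A ⊗ Beta T X) = BT2 T A X.
Proof. rewrite /Hl. rwl (BT2_nat T (idm A) (Beta T X)). bn. by rewrite Bmu_etar tensm_id comp_idl. Qed.

Lemma Hl_unit {A X : Ob C} : Hl A X ∘ Beta T (tens A (BT T X)) = Beta T A ⊗ idm _.
Proof. rewrite /Hl. rwr (Beta_T2 T A (BT T X)). bn. by rewrite Bmu_etal. Qed.

Lemma Hl_mod {A X : Ob C} :
  tens_act (Bmu T A) (Bmu T X) ∘ BTm T (Hl A X) = Hl A X ∘ Bmu T _.
Proof.
  rewrite /Hl /tens_act. rwr (Bmu_T2 T A (BT T X)). rewrite BTm_comp.
  rwl (BT2_nat T (idm (BT T A)) (Bmu T X)). bn. by rewrite Bmu_assoc.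
Qed.

Lemma BTm_merge_r {A B D E : Ob C} (g : Hom B D) (f : Hom A B) (y : Hom E _) :
  BTm T g ∘ (BTm T f ∘ y) = BTm T (g ∘ f) ∘ y.
Proof. by rewrite comp_assoc BTm_comp. Qed.
Lemma BT2_nat1 {A A' B : Ob C} (f : Hom A A') :
  (BTm T f ⊗ idm (BT T B)) ∘ BT2 T A B = BT2 T A' B ∘ BTm T (f ⊗ idm B).
Proof. by rewrite -BT2_nat BTm_id. Qed.
Lemma BT2_nat2 {A B B' : Ob C} (g : Hom B B') :
  (idm (BT T A) ⊗ BTm T g) ∘ BT2 T A B = BT2 T A B' ∘ BTm T (idm A ⊗ g).
Proof. by rewrite -BT2_nat BTm_id. Qed.
End Bimon.

Lemma iso_conj {C : SMCat} {A B A' B' : Ob C} (f : Hom A B) (g : Hom B A) (f' : Hom A' B') (g' : Hom B' A')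
  (k : Hom A A') (m : Hom B B') :
  f ∘ g = idm _ -> g' ∘ f' = idm _ -> f' ∘ k = m ∘ f -> k ∘ g = g' ∘ m.
Proof.
  move=> H1 H2 H3. rewrite -(comp_idl (k ∘ g)) -H2. ra. rwr H3. by rewrite H1 comp_idr.
Qed.

Section Closed2.
Context {C : SMCat} (L : LeftClosed C).
Lemma ihom_map_comp_r {X X' X'' Y Y' Y'' D : Ob C} (f : Hom X' X) (g : Hom Y Y') (f' : Hom X'' X') (g' : Hom Y' Y'') (y : Hom D _) :
  ihom_map L f' g' ∘ (ihom_map L f g ∘ y) = ihom_map L (f ∘ f') (g' ∘ g) ∘ y.
Proof. by rewrite comp_assoc ihom_map_comp. Qed.
Lemma coev_map {X X' Y Y' : Ob C} (f : Hom X' X) (g : Hom (tens Y X) Y') :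
  ihom_map L f g ∘ coev L X Y = curry L (g ∘ (idm _ ⊗ f)).
Proof. by rewrite /coev ihom_map_curry comp_idr. Qed.
Lemma ihom_split {Z Y Y' Y'' : Ob C} (g : Hom Y' Y'') (h : Hom Y Y') :
  ihom_map L (idm Z) (g ∘ h) = ihom_map L (idm Z) g ∘ ihom_map L (idm Z) h.
Proof. by rewrite ihom_map_comp comp_idl. Qed.
Lemma ev_post {X Y Y' Z : Ob C} (g : Hom Y Y') (a : Hom Z (ihom L X Y)) :
  g ∘ ev L X Y ∘ (a ⊗ idm X) = ev L X Y' ∘ ((ihom_map L (idm X) g ∘ a) ⊗ idm X).
Proof. rewrite tcomp_id. rwr (ev_ihom_map L (idm X) g). bn. reflexivity. Qed.
Lemma ev_pre {X X' Y Z : Ob C} (f : Hom X' X) (a : Hom Z (ihom L X Y)) :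
  ev L X Y ∘ (a ⊗ f) = ev L X' Y ∘ ((ihom_map L f (idm Y) ∘ a) ⊗ idm X').
Proof. rewrite tcomp_id. rwr (ev_ihom_map L f (idm Y)). rewrite comp_idl. bn. reflexivity. Qed.
Lemma ev_pre1 {X X' Y : Ob C} (f : Hom X' X) :
  ev L X Y ∘ (idm _ ⊗ f) = ev L X' Y ∘ (ihom_map L f (idm Y) ⊗ idm X').
Proof. by rewrite ev_ihom_map comp_idl. Qed.
End Closed2.


Section Anti.
Context {C : SMCat} (L : LeftClosed C) (T : Bimonad C)
  (s : forall X Y : Ob C, Hom (BT T (ihom L (BT T X) Y)) (ihom L X (BT T Y)))
  (Hs : is_left_antipode s).

Definition Ka X Y := s (BT T Y) (tens X (BT T Y)) ∘ BTm T (ihom_map L (Bmu T Y) (idm _)) ∘ BTm T (coev L (BT T Y) X).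
Definition K X Y := ev L (BT T Y) _ ∘ (Ka X Y ⊗ idm (BT T Y)).

Lemma Ka_eq X Y : ihom_map L (idm (BT T Y)) (Hl T X Y) ∘ Ka X Y = coev L (BT T Y) (BT T X).
Proof.
  case: Hs => nX [nY [ax1 ax2]].
  have e1 : ihom_map L (Bmu T Y) (idm (tens X (BT T Y))) ∘ coev L (BT T Y) X
     = ihom_map L (idm _) (idm X ⊗ Bmu T Y) ∘ coev L (BT T (BT T Y)) X.
  { rewrite !coev_map. bn. reflexivity. }
  rewrite /Ka. ra. rewrite -BTm_comp e1 BTm_comp.
  rwr (nY (BT T Y) _ _ (idm X ⊗ Bmu T Y)).
  rewrite ihom_map_comp_r comp_idl Hl_mu ihom_split /Hl. ra.
  rwl (ax2 (BT T Y) X).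
  rewrite ihom_map_comp_r comp_idl tmerge comp_idl Bmu_etal tensm_id ihom_map_id comp_idl.
  reflexivity.
Qed.

Lemma HK X Y : Hl T X Y ∘ K X Y = idm _.
Proof. rewrite /K comp_assoc ev_post Ka_eq. exact (ev_coev L). Qed.

Lemma KH X Y : K X Y ∘ Hl T X Y = idm _.
Proof.
  case: Hs => nX [nY [ax1 ax2]].
  set B := tens X (BT T Y).
  rewrite /K /Hl. ra. rwl (xch (Ka X Y) (Bmu T Y)). rwr (ev_pre1 L (Y:=BT T B) (Bmu T Y)). bn.
  rewrite /Ka. ra. rwl (nX (BT T Y) (BT T (BT T Y)) B (Bmu T Y)).
  have e2 : BTm T (ihom_map L (BTm T (Bmu T Y)) (idm B)) ∘ BTm T (ihom_map L (Bmu T Y) (idm B))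
     = BTm T (ihom_map L (Bmu T (BT T Y)) (idm B)) ∘ BTm T (ihom_map L (Bmu T Y) (idm B)).
  { by rewrite -!BTm_comp !ihom_map_comp Bmu_assoc. }
  rwr e2.
  have e3 : (s (BT T (BT T Y)) B ∘ (BTm T (ihom_map L (Bmu T (BT T Y)) (idm B)) ∘
        (BTm T (ihom_map L (Bmu T Y) (idm B)) ∘ BTm T (coev L (BT T Y) X)))) ⊗ idm (BT T (BT T Y))
        ∘ BT2 T X (BT T Y)
     = (s (BT T (BT T Y)) B ∘ BTm T (ihom_map L (Bmu T (BT T Y)) (idm B))) ⊗ idm _
        ∘ BT2 T _ _ ∘ BTm T ((ihom_map L (Bmu T Y) (idm B) ∘ coev L (BT T Y) X) ⊗ idm (BT T Y)).
  { rwl (BT2_nat T (ihom_map L (Bmu T Y) (idm B) ∘ coev L (BT T Y) X) (idm (BT T Y))).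
    rewrite BTm_id BTm_comp. bn. reflexivity. }
  rewrite e3. rwl (ax1 (BT T Y) B). rewrite -BTm_comp. ra. rewrite tmerge comp_idl.
  rewrite comp_assoc ihom_map_comp Bmu_etal comp_idl ihom_map_id comp_idl.
  by rewrite ev_coev BTm_id.
Qed.

End Anti.


Section Hopf.
Context {C : SMCat} (L : LeftClosed C) (T : Bimonad C) (HH : is_left_Hopf T).

Definition Hinv X Y : Hom (tens (BT T X) (BT T Y)) (BT T (tens X (BT T Y))) :=
  proj1_sig (constructive_indefinite_description _ (HH X Y)).
Lemma Hinv_l X Y : Hinv X Y ∘ Hl T X Y = idm _.
Proof. rewrite /Hinv. case: constructive_indefinite_description => g [H1 H2] /=. exact H1. Qed.
Lemma Hinv_r X Y : Hl T X Y ∘ Hinv X Y = idm _.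
Proof. rewrite /Hinv. case: constructive_indefinite_description => g [H1 H2] /=. exact H2. Qed.

Lemma Hinv_nat1 {A A' Z : Ob C} (g : Hom A A') :
  BTm T (g ⊗ idm (BT T Z)) ∘ Hinv A Z = Hinv A' Z ∘ (BTm T g ⊗ idm _).
Proof. apply: iso_conj (Hinv_r _ _) (Hinv_l _ _) _. exact: Hl_nat1. Qed.
Lemma Hinv_nat2 {A X X' : Ob C} (f : Hom X' X) :
  BTm T (idm A ⊗ BTm T f) ∘ Hinv A X' = Hinv A X ∘ (idm _ ⊗ BTm T f).
Proof. apply: iso_conj (Hinv_r _ _) (Hinv_l _ _) _. exact: Hl_nat2. Qed.
Lemma Hinv_mu {A X : Ob C} :
  BTm T (idm A ⊗ Bmu T X) ∘ Hinv A (BT T X) = Hinv A X ∘ (idm _ ⊗ Bmu T X).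
Proof. apply: iso_conj (Hinv_r _ _) (Hinv_l _ _) _. exact: Hl_mu. Qed.
Lemma Hinv_T2 {A X : Ob C} : Hinv A X ∘ BT2 T A X = BTm T (idm A ⊗ Beta T X).
Proof. by rewrite -Hl_eta comp_assoc Hinv_l comp_idl. Qed.

Definition sH X Y : Hom (BT T (ihom L (BT T X) Y)) (ihom L X (BT T Y)) :=
  curry L (BTm T (ev L (BT T X) Y) ∘ Hinv (ihom L (BT T X) Y) X ∘ (idm _ ⊗ Beta T X)).

Lemma sH_antipode : is_left_antipode sH.
Proof.
  split; [|split; [|split]].
  - move=> X X' Y f. rewrite /sH curry_nat ihom_map_curry. f_equal. rewrite comp_idl. ra.
    rwr (xch (BTm T (ihom_map L (BTm T f) (idm Y))) (Beta T X')).
    rwl (Hinv_nat1 (Z:=X') (ihom_map L (BTm T f) (idm Y))). rewrite BTm_merge_r ev_ihom_map comp_idl BTm_comp.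
    ra. rwr (Hinv_nat2 (A:=ihom L (BT T X) Y) f). bn. by rewrite Beta_nat.
  - move=> X Y Y' g. rewrite /sH curry_nat ihom_map_curry. f_equal. ra.
    rwr (xch (BTm T (ihom_map L (idm (BT T X)) g)) (Beta T X)).
    rwl (Hinv_nat1 (Z:=X) (ihom_map L (idm (BT T X)) g)). rewrite BTm_merge_r ev_ihom_map tensm_id comp_idr BTm_comp.
    bn. reflexivity.
  - move=> X Y. rewrite /sH ev_curry_r. ra.
    rwr (xch (BTm T (ihom_map L (Bmu T X) (idm Y))) (Beta T (BT T X))).
    rwl (Hinv_nat1 (Z:=BT T X) (ihom_map L (Bmu T X) (idm Y))).
    rewrite BTm_merge_r (ev_ihom_map L (Bmu T X) (idm Y)) comp_idl (BTm_comp T (idm _ ⊗ Bmu T X)).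
    ra. rwr (Hinv_mu (A:=ihom L (BT T X) Y) (X:=X)). bn. rewrite Bmu_etal tensm_id comp_idl.
    rewrite Hinv_T2 -BTm_comp. f_equal. by rewrite ev_pre1.
  - move=> X Y. rewrite coev_map /sH ihom_map_curry curry_nat. f_equal. ra.
    rewrite ?tensm_id ?comp_idl ?comp_idr. rwr (xch (BTm T (coev L (BT T X) Y)) (Beta T X)).
    rwl (Hinv_nat1 (Z:=X) (coev L (BT T X) Y)). rewrite BTm_merge_r ev_coev BTm_id comp_idl.
    have := Hinv_r Y X. rewrite /Hl => E. rwr E. bn. reflexivity.
Qed.

End Hopf.


Section Part3.
Context {C : SMCat} (L : LeftClosed C) (T : Bimonad C)
  (s : forall X Y : Ob C, Hom (BT T (ihom L (BT T X) Y)) (ihom L X (BT T Y)))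
  (Hs : is_left_antipode s) (HH : is_left_Hopf T).

Lemma s_eta X Y : s X Y ∘ Beta T (ihom L (BT T X) Y) = ihom_map L (Beta T X) (Beta T Y).
Proof.
  case: Hs => nX [nY [ax1 ax2]].
  apply: ev_inj. rewrite (ev_ihom_map L (Beta T X) (Beta T Y)).
  transitivity (ev L (BT T X) (BT T Y)
    ∘ (s (BT T X) Y ∘ BTm T (ihom_map L (Bmu T X) (idm Y))) ⊗ idm (BT T X)
    ∘ BT2 T (ihom L (BT T X) Y) X ∘ Beta T _).
  { rewrite -comp_assoc Beta_T2. ra. rewrite tmerge comp_idl.
    rewrite (ev_pre L (Beta T X)). ra.
    rwl (nX (BT T X) X Y (Beta T X)). rewrite BTm_merge_r ihom_map_comp Bmu_etar comp_idl ihom_map_id BTm_id comp_idl.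
    reflexivity. }
  rewrite -(ax1 X Y) Beta_nat (ev_ihom_map L (Beta T X) (idm Y)) comp_idl. ra. reflexivity.
Qed.

Section Mods.
Context (M : Ob C) (r : Hom (BT T M) M) (Hr : is_module r) (N : Ob C) (t : Hom (BT T N) N) (Ht : is_module t).

Definition hh := ihom_map L (idm M) t ∘ s M N ∘ BTm T (ihom_map L r (idm N)).
Definition kk Z := (idm (BT T Z) ⊗ r) ∘ BT2 T Z M.
Definition sig Z := BTm T (idm Z ⊗ r) ∘ Hinv T HH Z M ∘ (idm _ ⊗ Beta T M).

Lemma k_sec Z : kk Z ∘ sig Z = idm _.
Proof.
  case: Hr => Hr1 Hr2.
  rewrite /kk /sig. ra. rwl (BT2_nat T (idm Z) r). bn. rewrite Hr2.
  rewrite -(comp_idl (idm (BT T Z))) -tmerge. have E := Hinv_r T HH Z M. rewrite /Hl in E. rwr E.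
  bn. by rewrite Hr1 tensm_id.
Qed.

Lemma k_cancel Z N' (P Q : Hom (tens (BT T Z) M) N') : P ∘ kk Z = Q ∘ kk Z -> P = Q.
Proof. move=> E. by rewrite -(comp_idr P) -(comp_idr Q) -(k_sec Z) (comp_assoc P) (comp_assoc Q) E. Qed.

Lemma kT_cancel Z N' (P Q : Hom (BT T (tens (BT T Z) M)) N') : P ∘ BTm T (kk Z) = Q ∘ BTm T (kk Z) -> P = Q.
Proof.
  move=> E. rewrite -(comp_idr P) -(comp_idr Q) -BTm_id -(k_sec Z) BTm_comp !comp_assoc E. reflexivity.
Qed.

Lemma hb : t ∘ BTm T (ev L M N) = ev L M N ∘ ((hh ⊗ r) ∘ BT2 T (ihom L M N) M).
Proof.
  case: Hs => nX [nY [ax1 ax2]]. case: Hr => Hr1 Hr2.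
  symmetry. rewrite /hh. ra. rewrite tsplit_cl. ra.
  rwr (ev_ihom_map L (idm M) t). bn.
  rwr (ev_pre L r (s M N ∘ BTm T (ihom_map L r (idm N)))).
  rwl (nX M (BT T M) N r).
  have e2 : BTm T (ihom_map L (BTm T r) (idm N)) ∘ BTm T (ihom_map L r (idm N))
     = BTm T (ihom_map L (Bmu T M) (idm N)) ∘ BTm T (ihom_map L r (idm N)).
  { by rewrite -!BTm_comp !ihom_map_comp Hr2. }
  rwr e2.
  have e3 : (s (BT T M) N ∘ (BTm T (ihom_map L (Bmu T M) (idm N)) ∘ BTm T (ihom_map L r (idm N))))
        ⊗ idm (BT T M) ∘ BT2 T (ihom L M N) M
     = (s (BT T M) N ∘ BTm T (ihom_map L (Bmu T M) (idm N))) ⊗ idm _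
        ∘ BT2 T _ _ ∘ BTm T (ihom_map L r (idm N) ⊗ idm M).
  { rwl (BT2_nat T (ihom_map L r (idm N)) (idm M)). rewrite BTm_id. bn. reflexivity. }
  rwr e3. rwl (ax1 M N). rewrite -BTm_comp. bn.
  rewrite ihom_map_comp Hr1 comp_idl ihom_map_id tensm_id comp_idr. reflexivity.
Qed.

Lemma h_eta : hh ∘ Beta T (ihom L M N) = idm _.
Proof.
  case: Hr => Hr1 Hr2. case: Ht => Ht1 Ht2.
  rewrite /hh. ra. rewrite Beta_nat. rwr (s_eta M N).
  rewrite !ihom_map_comp_r ihom_map_comp. rewrite !comp_idr Hr1 Ht1. exact: ihom_map_id.
Qed.

Lemma h_assoc_gen (hh : Hom (BT T (ihom L M N)) (ihom L M N))
  (hb : t ∘ BTm T (ev L M N) = ev L M N ∘ ((hh ⊗ r) ∘ BT2 T (ihom L M N) M)) :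
  hh ∘ BTm T hh = hh ∘ Bmu T (ihom L M N).
Proof.
  case: Hr => Hr1 Hr2. case: Ht => Ht1 Ht2.
  set A := ihom L M N.
  apply: ev_inj. apply: (k_cancel (BT T A)). apply: (kT_cancel A).
  have L1 : ev L M N ∘ ((hh ∘ BTm T hh) ⊗ idm M) ∘ kk (BT T A) ∘ BTm T (kk A)
      = t ∘ BTm T (ev L M N) ∘ Bmu T (tens A M).
  { rewrite /kk. ra. bn. rewrite (tsplit_cl2 hh (BTm T hh) r). ra.
    rwr (BT2_nat1 T (B:=M) hh). rwl hb. rewrite !BTm_merge_r -BTm_comp. bn.
    rewrite -hb BTm_comp. rwr Ht2. rwl (Bmu_nat T (ev L M N)). reflexivity. }
  have R1 : ev L M N ∘ ((hh ∘ Bmu T A) ⊗ idm M) ∘ kk (BT T A) ∘ BTm T (kk A)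
      = t ∘ BTm T (ev L M N) ∘ Bmu T (tens A M).
  { rewrite /kk. ra. rewrite (BTm_comp T (BT2 T A M) (idm _ ⊗ r)). ra.
    rwl (BT2_nat2 T (A:=BT T A) r). bn. rewrite Hr2 -(tmerge (Bmu T A) hh (Bmu T M) r). ra.
    rwl (Bmu_T2 T A M). rwl hb. reflexivity. }
  by rewrite L1 R1.
Qed.

Lemma h_univ_gen (hh : Hom (BT T (ihom L M N)) (ihom L M N))
  (hb : t ∘ BTm T (ev L M N) = ev L M N ∘ ((hh ⊗ r) ∘ BT2 T (ihom L M N) M))
  Z (z : Hom (BT T Z) Z) (f : Hom (tens Z M) N) :
  is_mod_hom (tens_act z r) t f -> hh ∘ BTm T (curry L f) = curry L f ∘ z.
Proof.
  rewrite /is_mod_hom /tens_act => Hf.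
  apply: ev_inj. apply: (k_cancel Z). rewrite /kk.
  transitivity (f ∘ ((z ⊗ r) ∘ BT2 T Z M)); last first.
  { ra. rwr (ev_curry_r L f z). bn. reflexivity. }
  rewrite -Hf. ra. bn. rewrite (tsplit_cl2 hh (BTm T (curry L f)) r). ra.
  rwr (BT2_nat1 T (B:=M) (curry L f)). rwl hb. by rewrite -BTm_comp ev_curry.
Qed.

Lemma part3 : is_left_ihom_EM r t hh (ev L M N).
Proof.
  split; [split; [exact h_eta | exact (h_assoc_gen hh hb)] | split; [exact hb |]].
  move=> Z z Hz f Hf. exists (curry L f). split; [exact (h_univ_gen hh hb Z z f Hf) | split; [exact: ev_curry |]].
  move=> g' _ He. by rewrite -He curry_ev.
Qed.

End Mods.
End Part3.


Section II.
Context {C : SMCat} (L : LeftClosed C) (T : Bimonad C).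

Lemma mu_module X : is_module (Bmu T X).
Proof. split; [exact: Bmu_etal | exact: Bmu_assoc]. Qed.

Lemma tens_module {A B : Ob C} (r : Hom (BT T A) A) (s : Hom (BT T B) B) :
  is_module r -> is_module s -> is_module (tens_act r s).
Proof.
  case=> r1 r2 [s1 s2]. rewrite /tens_act. split.
  - ra. rewrite Beta_T2 tmerge r1 s1. exact: tensm_id.
  - rewrite BTm_comp. ra. rwl (BT2_nat T r s). bn. rewrite r2 s2 -tmerge. ra.
    rwl (Bmu_T2 T A B). reflexivity.
Qed.

Lemma id_mod {A : Ob C} (r : Hom (BT T A) A) : is_mod_hom r r (idm A).
Proof. by rewrite /is_mod_hom BTm_id comp_idr comp_idl. Qed.

Lemma ii_i : EM_left_closed_and_U_left_closed L T -> is_left_Hopf T.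
Proof.
  move=> HC X Y.
  have [H1 [h1 [e1 [[Hm1 [He1 Hu1]] [c' [c'1 c'2]]]]]] :=
    HC (BT T Y) (Bmu T Y) (mu_module Y) (BT T (tens X (BT T Y))) (Bmu T _) (mu_module _).
  set a := c' ∘ curry L (Beta T (tens X (BT T Y))).
  set phi := h1 ∘ BTm T a.
  set G := e1 ∘ (phi ⊗ idm (BT T Y)).
  have mphi : is_mod_hom (Bmu T X) h1 phi.
  { case: Hm1 => _ Hm12. rewrite /is_mod_hom /phi BTm_comp. ra. rwr Hm12. by rewrite Bmu_nat. }
  have mG : is_mod_hom (tens_act (Bmu T X) (Bmu T Y)) (Bmu T _) G.
  { apply: mod_comp He1. exact: tens_mod mphi (id_mod _). }
  have mHl : is_mod_hom (Bmu T (tens X (BT T Y))) (tens_act (Bmu T X) (Bmu T Y)) (Hl T X Y).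
  { exact: Hl_mod. }
  have claim1 : G ∘ (Beta T X ⊗ idm (BT T Y)) = Beta T (tens X (BT T Y)).
  { rewrite /G -comp_assoc tmerge comp_idl.
    have -> : phi ∘ Beta T X = a.
    { case: Hm1 => Hm11 _. by rewrite /phi -comp_assoc Beta_nat comp_assoc Hm11 comp_idl. }
    rewrite (e_curry L) /a comp_assoc c'2 comp_idl. exact: ev_curry. }
  exists G. split.
  - rewrite (free_ext T _ _ (mod_comp T _ _ _ _ _ mHl mG)). rewrite -(comp_assoc G) Hl_unit claim1. exact: Bmu_etar.
  - have [H2 [h2 [e2 [[Hm2 [He2 Hu2]] [c2 [c21 c22]]]]]] :=
      HC (BT T Y) (Bmu T Y) (mu_module Y) (tens (BT T X) (BT T Y)) (tens_act (Bmu T X) (Bmu T Y))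
        (tens_module _ _ (mu_module X) (mu_module Y)).
    have [g1 [mg1 [eg1 _]]] := Hu2 (BT T X) (Bmu T X) (mu_module X) _ (mod_comp T _ _ _ _ _ mG mHl).
    have [g2 [mg2 [eg2 _]]] := Hu2 (BT T X) (Bmu T X) (mu_module X) _ (id_mod _).
    have ge : g1 ∘ Beta T X = g2 ∘ Beta T X.
    { have E : curry L e2 ∘ (g1 ∘ Beta T X) = curry L e2 ∘ (g2 ∘ Beta T X).
      { rewrite !curry_nat !tcomp_id (comp_assoc e2 (g1 ⊗ _)) (comp_assoc e2 (g2 ⊗ _)) eg1 eg2 comp_idl.
        by rewrite -(comp_assoc (Hl T X Y)) claim1 Hl_unit. }
      have := f_equal (fun q => c2 ∘ q) E. by rewrite /= !comp_assoc c21 !comp_idl. }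
    rewrite -eg1 -eg2 (free_ext T _ _ mg1) (free_ext T _ _ mg2) ge. reflexivity.
Qed.

End II.

Lemma curry_ev_id {C : SMCat} (L : LeftClosed C) (M N : Ob C) : curry L (ev L M N) = idm _.
Proof. rewrite -{1}(comp_idr (ev L M N)) -tensm_id. exact: curry_ev. Qed.

Theorem mainTheorem6 (C : SMCat) (L : LeftClosed C) (T : Bimonad C) :
  (is_left_Hopf T <-> EM_left_closed_and_U_left_closed L T) /\
  (EM_left_closed_and_U_left_closed L T <-> has_left_antipode L T) /\
  (forall s : forall X Y : Ob C, Hom (BT T (ihom L (BT T X) Y)) (ihom L X (BT T Y)),
     is_left_antipode s ->
     forall (M : Ob C) (r : Hom (BT T M) M), is_module r ->
     forall (N : Ob C) (t : Hom (BT T N) N), is_module t ->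
     is_left_ihom_EM r t
       (ihom_map L (idm M) t ∘ s M N ∘ BTm T (ihom_map L r (idm N)))
       (ev L M N)).
Proof.
  have iii_i : has_left_antipode L T -> is_left_Hopf T.
  { case=> s Hs X Y. exists (K L T s X Y). split; [exact: KH | exact: HK]. }
  have i_iii : is_left_Hopf T -> has_left_antipode L T.
  { move=> HH. exists (sH L T HH). exact: sH_antipode. }
  have p3 : forall s : forall X Y : Ob C, Hom (BT T (ihom L (BT T X) Y)) (ihom L X (BT T Y)),
     is_left_antipode s ->
     forall (M : Ob C) (r : Hom (BT T M) M), is_module r ->
     forall (N : Ob C) (t : Hom (BT T N) N), is_module t ->
     is_left_ihom_EM r t
       (ihom_map L (idm M) t ∘ s M N ∘ BTm T (ihom_map L r (idm N)))
       (ev L M N).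
  { move=> s Hs M r Hr N t Ht. exact: (part3 L T s Hs (iii_i (ex_intro _ s Hs)) M r Hr N t Ht). }
  have iii_ii : has_left_antipode L T -> EM_left_closed_and_U_left_closed L T.
  { case=> s Hs M r Hr N t Ht.
    exists (ihom L M N), (ihom_map L (idm M) t ∘ s M N ∘ BTm T (ihom_map L r (idm N))), (ev L M N).
    split; first exact: p3.
    exists (idm _). rewrite curry_ev_id comp_idl. by split. }
  have ii_i' := ii_i L T.
  split; [split|split; [split|]].
  - move=> H; exact: iii_ii (i_iii H).
  - exact: ii_i'.
  - move=> H; exact: i_iii (ii_i' H).
  - exact: iii_ii.
  - exact: p3.
Qed.
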